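(* Let $\tau$ be a countable language, $C\subseteq\mathbb{N}$, and $\varphi$ a $C$-computable $\bigwedge\!\!\bigwedge$-sentence of $\tau$. Then there are $\Pi_1$ $\tau^*_{\mathrm{tup}}$-formulas $\chi$ and $\theta_s$ ($s\in\mathbb{N}$) such that for every $\tau$-structure $\mathcal{M}$ with domain $M$: $\mathcal{M}\models\varphi$ if and only if there exist a function $g:\mathbb{N}\times M^{<\mathbb{N}}\to M$ and a set $R\subseteq\mathbb{N}$ such that $(\mathcal{M}^{<\mathbb{N}},R,g)\models\{\chi\}\cup\{\theta_s: s\in\mathbb{N}\}\cup\{\underline{n}\in R: n\in C\}\cup\{\underline{n}\notin R: n\notin C\}$, where $\underline n$ denotes the numeral for $n$.
   Context: $\tau_{\mathrm{tup}}$ is the three-sorted language with sorts $M$ (carrying $\tau$), $N$ (carrying the language of arithmetic $0,1,+,\cdot,<$), and $M_{\mathrm{tup}}$, with a length function $|\cdot|:M_{\mathrm{tup}}\to N$ and indexing relation $\mathrm{ind}\subseteq M_{\mathrm{tup}}\times N\times M$; $\tau^*_{\mathrm{tup}}=\tau_{\mathrm{tup}}\cup\{R,g\}$ with $R$ unary on $N$ and $g:N\times M_{\mathrm{tup}}\to M$. $\mathcal{M}^{<\mathbb{N}}=(\mathcal{M},\mathbb{N},M^{<\mathbb{N}})$ is the standard $\tau_{\mathrm{tup}}$-structure of all finite tuples from $M$ with natural length and indexing. The $\Pi_1$ $\tau^*_{\mathrm{tup}}$-formulas are defined inductively: finitary quantifier-free formulas; arbitrary quantification $\exists x\in M$, $\forall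 x\in M$ over the $M$-sort; universal quantification over $N$ and over $M_{\mathrm{tup}}$; and bounded existential quantification $(\exists x\in N, x<t)$ and $(\exists\pi\in M_{\mathrm{tup}},|\pi|<t)$ for a term $t$, each applied to $\Pi_1$ formulas. $\bigwedge\!\!\bigwedge$-formulas are the $\mathcal{L}_{\omega_1\omega}$-formulas built from finitary quantifier-free formulas by $\exists$, $\forall$ and countable conjunctions (with finitely many free variables in total). Formula codes: a labeled tree is a nonempty $T\subseteq\omega^{<\omega}$ with functions $l,v$ such that each $\sigma\in T$ is either a leaf with $l(\sigma)$ the code of a finite disjunction of atomic and negated atomic formulas whose free variables are $\{x_i:i\in v(\sigma)\}$; or has $l(\sigma)=\ulcorner\exists x_i\urcorner$ or $\ulcorner\forall x_i\urcorner$ with unique child $\sigma^\frown0$ and $v(\sigma)=v(\sigma^\frown0)\setminus\{i\}$; or has $l(\sigma)=\ulcorner\bigwedge\!\!\bigwedge\urcorner$ or $\ulcorner\bigvee\!\!\bigvee\urcorner$ with $v(\sigma)=\bigcup_{\sigma^\frown i\in T}v(\sigma^\frown i)$ finite. A sentence code is a well-founded labeled tree with $v(\varnothing)=\varnothing$; it codes a sentence in the obvious way. $\varphi$ is a $C$-computable $\bigwedge\!\!\bigwedge$-sentence if it has a sentence code with $T,l,v$ computable from $C$ and no node labeled $\ulcorner\bigvee\!\!\bigvee\urcorner$. *)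

(* Defs.v *)
From Stdlib Require Import List Arith.
From Stdlib Require Vector.
Import ListNotations.

Record Lang : Type := {
  Fsym : Type;  far : Fsym -> nat;
  Rsym : Type;  rar : Rsym -> nat;
  fcode : Fsym -> nat;  fcode_inj : forall f g, fcode f = fcode g -> f = g;
  rcode : Rsym -> nat;  rcode_inj : forall r q, rcode r = rcode q -> r = q }.

Record Structure (L : Lang) : Type := {
  dom : Type;
  funs : forall f : Fsym L, Vector.t dom (far L f) -> dom;
  rels : forall r : Rsym L, Vector.t dom (rar L r) -> Prop }.
Arguments dom {L}. Arguments funs {L}. Arguments rels {L}.

Definition upd {A : Type} (s : nat -> A) (i : nat) (a : A) : nat -> A :=
  fun j => if Nat.eqb j i then a else s j.

Section Tau.
Variable L : Lang.

Inductive term : Type :=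
| TVar (n : nat)
| TApp (f : Fsym L) (args : Vector.t term (far L f)).

Inductive atom : Type :=
| AEq (t1 t2 : term)
| ARel (r : Rsym L) (args : Vector.t term (rar L r)).

(* literal: (true, a) is a, (false, a) is the negation of a *)
Definition literal : Type := (bool * atom)%type.
Definition clause : Type := list literal.

Fixpoint teval (M : Structure L) (s : nat -> dom M) (t : term) : dom M :=
  match t with
  | TVar n => s n
  | TApp f args => funs M f (Vector.map (teval M s) args)
  end.

Definition atom_sat (M : Structure L) (s : nat -> dom M) (a : atom) : Prop :=
  match a with
  | AEq t1 t2 => teval M s t1 = teval M s t2
  | ARel r args => rels M r (Vector.map (teval M s) args)
  end.

Definition lit_sat (M : Structure L) (s : nat -> dom M) (x : literal) : Prop :=
  if fst x then atom_sat M s (snd x) else ~ atom_sat M s (snd x).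

Definition clause_sat (M : Structure L) (s : nat -> dom M) (c : clause) : Prop :=
  exists x, In x c /\ lit_sat M s x.

Fixpoint fv_term (t : term) : list nat :=
  match t with
  | TVar n => [n]
  | TApp f args => concat (Vector.to_list (Vector.map fv_term args))
  end.

Definition fv_atom (a : atom) : list nat :=
  match a with
  | AEq t1 t2 => fv_term t1 ++ fv_term t2
  | ARel r args => concat (Vector.to_list (Vector.map fv_term args))
  end.

Definition fv_clause (c : clause) : list nat :=
  concat (map (fun x => fv_atom (snd x)) c).

Definition npair (x y : nat) : nat := (x + y) * (x + y + 1) / 2 + y.

Fixpoint code_list (s : list nat) : nat :=
  match s with
  | [] => 0
  | x :: s' => S (npair x (code_list s'))
  end.

Fixpoint code_term (t : term) : nat :=
  match t with
  | TVar n => npair 0 n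
  | TApp f args =>
      npair 1 (npair (fcode L f) (code_list (Vector.to_list (Vector.map code_term args))))
  end.

Definition code_atom (a : atom) : nat :=
  match a with
  | AEq t1 t2 => npair 0 (npair (code_term t1) (code_term t2))
  | ARel r args =>
      npair 1 (npair (rcode L r) (code_list (Vector.to_list (Vector.map code_term args))))
  end.

Definition code_lit (x : literal) : nat :=
  npair (if fst x then 1 else 0) (code_atom (snd x)).

Definition code_clause (c : clause) : nat := code_list (map code_lit c).

Definition lab_clause (c : clause) : nat := npair 0 (code_clause c).
Definition lab_ex (i : nat) : nat := npair 1 i.
Definition lab_all (i : nat) : nat := npair 2 i.
Definition lab_and : nat := npair 3 0.              (* countable conjunction *)
Definition lab_or : nat := npair 4 0.               (* countable disjunction *)

(* finite sets of naturals coded by v : i \in v(sigma) iff bit i is set *)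
Definition inv (v : list nat -> nat) (sigma : list nat) (k : nat) : Prop :=
  Nat.testbit (v sigma) k = true.

Definition is_tree (T : list nat -> Prop) : Prop :=
  T [] /\ forall sigma j, T (sigma ++ [j]) -> T sigma.

Definition node_ok (T : list nat -> Prop) (l v : list nat -> nat) (sigma : list nat) : Prop :=
  (exists c : clause,
      l sigma = lab_clause c /\
      (forall k, In k (fv_clause c) <-> inv v sigma k) /\
      (forall j, ~ T (sigma ++ [j])))
  \/ (exists i, (l sigma = lab_ex i \/ l sigma = lab_all i) /\
      T (sigma ++ [0]) /\ (forall j, T (sigma ++ [j]) -> j = 0) /\
      (forall k, inv v sigma k <-> (inv v (sigma ++ [0]) k /\ k <> i)))
  \/ ((l sigma = lab_and \/ l sigma = lab_or) /\
      (forall k, inv v sigma k <-> exists j, T (sigma ++ [j]) /\ inv v (sigma ++ [j]) k)).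

Definition labeled_tree (T : list nat -> Prop) (l v : list nat -> nat) : Prop :=
  is_tree T /\ forall sigma, T sigma -> node_ok T l v sigma.

Definition well_founded_tree (T : list nat -> Prop) : Prop :=
  ~ exists p : nat -> nat, forall n, T (map p (seq 0 n)).

Definition sentence_code (T : list nat -> Prop) (l v : list nat -> nat) : Prop :=
  labeled_tree T l v /\ well_founded_tree T /\ forall k, ~ inv v [] k.

(* For a well-founded tree this inductive definition coincides with the
   usual recursive (Tarskian) semantics of the coded L_{omega1 omega} formula. *)
Inductive SatNode (T : list nat -> Prop) (l : list nat -> nat) (M : Structure L)
  : list nat -> (nat -> dom M) -> Prop :=
| sat_leaf sigma s c : l sigma = lab_clause c -> clause_sat M s c -> SatNode T l M sigma s
| sat_ex sigma s i a : l sigma = lab_ex i ->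
    SatNode T l M (sigma ++ [0]) (upd s i a) -> SatNode T l M sigma s
| sat_all sigma s i : l sigma = lab_all i ->
    (forall a, SatNode T l M (sigma ++ [0]) (upd s i a)) -> SatNode T l M sigma s
| sat_and sigma s : l sigma = lab_and ->
    (forall j, T (sigma ++ [j]) -> SatNode T l M (sigma ++ [j]) s) -> SatNode T l M sigma s
| sat_or sigma s j : l sigma = lab_or -> T (sigma ++ [j]) ->
    SatNode T l M (sigma ++ [j]) s -> SatNode T l M sigma s.

Definition ModelsCode (M : Structure L) (T : list nat -> Prop) (l : list nat -> nat) : Prop :=
  forall s : nat -> dom M, SatNode T l M [] s.

End Tau.

Arguments TVar {L}. Arguments TApp {L}. Arguments AEq {L}. Arguments ARel {L}.

Inductive rf : Type :=
| RZero | RSucc | RProj (i : nat) | ROracle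
| RComp (f : rf) (gs : list rf) | RPrec (g h : rf) | RMu (f : rf).

Inductive ev (C : nat -> Prop) : rf -> list nat -> nat -> Prop :=
| ev_zero xs : ev C RZero xs 0
| ev_succ x xs : ev C RSucc (x :: xs) (S x)
| ev_proj i xs : i < length xs -> ev C (RProj i) xs (nth i xs 0)
| ev_or_in x xs : C x -> ev C ROracle (x :: xs) 1
| ev_or_out x xs : ~ C x -> ev C ROracle (x :: xs) 0
| ev_comp f gs xs ys y : evs C gs xs ys -> ev C f ys y -> ev C (RComp f gs) xs y
| ev_prec0 g h xs y : ev C g xs y -> ev C (RPrec g h) (0 :: xs) y
| ev_precS g h n xs r y : ev C (RPrec g h) (n :: xs) r -> ev C h (n :: r :: xs) y ->
    ev C (RPrec g h) (S n :: xs) y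
| ev_mu f xs n : ev C f (n :: xs) 0 -> (forall m, m < n -> exists k, ev C f (m :: xs) (S k)) ->
    ev C (RMu f) xs n
with evs (C : nat -> Prop) : list rf -> list nat -> list nat -> Prop :=
| evs_nil xs : evs C [] xs []
| evs_cons g gs xs y ys : ev C g xs y -> evs C gs xs ys -> evs C (g :: gs) xs (y :: ys).

Definition C_computable_set (C : nat -> Prop) (T : list nat -> Prop) : Prop :=
  exists p, forall sigma, (T sigma -> ev C p [code_list sigma] 1) /\
                          (~ T sigma -> ev C p [code_list sigma] 0).

Definition C_computable_on (C : nat -> Prop) (T : list nat -> Prop) (f : list nat -> nat) : Prop :=
  exists p, forall sigma, T sigma -> ev C p [code_list sigma] (f sigma).

(* (T, l, v) is a sentence code computable from C with no node labeled "\/\/":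
   phi is then a C-computable /\/\-sentence. *)
Definition C_computable_BB_code (L : Lang) (C : nat -> Prop)
  (T : list nat -> Prop) (l v : list nat -> nat) : Prop :=
  sentence_code L T l v /\
  C_computable_set C T /\ C_computable_on C T l /\ C_computable_on C T v /\
  (forall sigma, T sigma -> l sigma <> lab_or).

Section Tup.
Variable L : Lang.

Inductive tmT : Type := TupVar (i : nat).

Inductive tmN : Type :=
| NVar (i : nat) | NZero | NOne
| NAdd (a b : tmN) | NMul (a b : tmN)
| NLen (p : tmT).

Inductive tmM : Type :=
| MVar (i : nat)
| MApp (f : Fsym L) (args : Vector.t tmM (far L f))
| MG (n : tmN) (p : tmT).

Inductive tatom : Type :=
| AtEqM (a b : tmM) | AtEqN (a b : tmN) | AtEqT (a b : tmT)
| AtRel (r : Rsym L) (args : Vector.t tmM (rar L r))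
| AtLt (a b : tmN)
| AtInd (p : tmT) (n : tmN) (x : tmM)
| AtR (n : tmN).

Inductive qf : Type :=
| QAtom (a : tatom) | QNeg (q : qf) | QAnd (q1 q2 : qf) | QOr (q1 q2 : qf).

Inductive pi1 : Type :=
| PQF (q : qf)
| PExM (i : nat) (p : pi1) | PAllM (i : nat) (p : pi1)
| PAllN (i : nat) (p : pi1) | PAllT (i : nat) (p : pi1)
| PBExN (i : nat) (t : tmN) (p : pi1)
| PBExT (i : nat) (t : tmN) (p : pi1).

Variable M : Structure L.
Variable R : nat -> Prop.
Variable g : nat -> list (dom M) -> dom M.

Definition evT (sT : nat -> list (dom M)) (t : tmT) : list (dom M) :=
  match t with TupVar i => sT i end.

Fixpoint evN (sN : nat -> nat) (sT : nat -> list (dom M)) (t : tmN) : nat :=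
  match t with
  | NVar i => sN i
  | NZero => 0
  | NOne => 1
  | NAdd a b => evN sN sT a + evN sN sT b
  | NMul a b => evN sN sT a * evN sN sT b
  | NLen p => length (evT sT p)
  end.

Fixpoint evM (sM : nat -> dom M) (sN : nat -> nat) (sT : nat -> list (dom M)) (t : tmM)
  : dom M :=
  match t with
  | MVar i => sM i
  | MApp f args => funs M f (Vector.map (evM sM sN sT) args)
  | MG n p => g (evN sN sT n) (evT sT p)
  end.

Definition tatom_sat sM sN sT (a : tatom) : Prop :=
  match a with
  | AtEqM x y => evM sM sN sT x = evM sM sN sT y
  | AtEqN x y => evN sN sT x = evN sN sT y
  | AtEqT x y => evT sT x = evT sT y
  | AtRel r args => rels M r (Vector.map (evM sM sN sT) args)
  | AtLt x y => evN sN sT x < evN sN sT y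
  | AtInd p n x => nth_error (evT sT p) (evN sN sT n) = Some (evM sM sN sT x)
  | AtR n => R (evN sN sT n)
  end.

Fixpoint qf_sat sM sN sT (q : qf) : Prop :=
  match q with
  | QAtom a => tatom_sat sM sN sT a
  | QNeg q' => ~ qf_sat sM sN sT q'
  | QAnd q1 q2 => qf_sat sM sN sT q1 /\ qf_sat sM sN sT q2
  | QOr q1 q2 => qf_sat sM sN sT q1 \/ qf_sat sM sN sT q2
  end.

Fixpoint pi1_sat (sM : nat -> dom M) (sN : nat -> nat) (sT : nat -> list (dom M))
  (p : pi1) : Prop :=
  match p with
  | PQF q => qf_sat sM sN sT q
  | PExM i p' => exists a, pi1_sat (upd sM i a) sN sT p'
  | PAllM i p' => forall a, pi1_sat (upd sM i a) sN sT p'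
  | PAllN i p' => forall n, pi1_sat sM (upd sN i n) sT p'
  | PAllT i p' => forall pi, pi1_sat sM sN (upd sT i pi) p'
  | PBExN i t p' => exists n, n < evN sN sT t /\ pi1_sat sM (upd sN i n) sT p'
  | PBExT i t p' => exists pi, length pi < evN sN sT t /\ pi1_sat sM sN (upd sT i pi) p'
  end.

Definition TupModels (p : pi1) : Prop :=
  forall sM sN sT, pi1_sat sM sN sT p.

End Tup.

Arguments AtR {L}. Arguments QAtom {L}. Arguments QNeg {L}. Arguments PQF {L}.

Fixpoint numeral (n : nat) : tmN :=
  match n with
  | 0 => NZero
  | S k => NAdd (numeral k) NOne
  end.

(* Main.v *)
Require Import Defs.
From Stdlib Require Import List Arith Lia Classical ClassicalEpsilon.
From Stdlib Require Vector.
Import ListNotations.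

Definition tri (n : nat) := n * (n + 1) / 2.

Lemma tri_S n : tri (S n) = tri n + S n.
Proof.
  unfold tri.
  replace (S n * (S n + 1)) with (n * (n + 1) + (S n) * 2) by lia.
  rewrite Nat.div_add by lia. reflexivity.
Qed.

Lemma tri_mono n m : n < m -> tri n + n < tri m.
Proof.
  induction m; intros H; [lia|].
  rewrite tri_S. destruct (Nat.eq_dec n m); [subst; lia|].
  specialize (IHm ltac:(lia)). lia.
Qed.

Lemma npair_inj a b c d : npair a b = npair c d -> a = c /\ b = d.
Proof.
  unfold npair. change ((a + b) * (a + b + 1) / 2) with (tri (a+b)).
  change ((c + d) * (c + d + 1) / 2) with (tri (c+d)).
  intros H.
  destruct (lt_eq_lt_dec (a+b) (c+d)) as [[Hl|He]|Hl].
  - pose proof (tri_mono _ _ Hl). lia.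
  - rewrite He in H. lia.
  - pose proof (tri_mono _ _ Hl). lia.
Qed.

Lemma code_list_inj s s' : code_list s = code_list s' -> s = s'.
Proof.
  revert s'; induction s as [|x s IH]; intros [|y s'] H; simpl in H; try discriminate; auto.
  injection H as H. apply npair_inj in H as [-> H]. f_equal; auto.
Qed.

Lemma map_inj_in {A B} (f : A -> B) (l l' : list A) :
  (forall x, In x l -> forall y, f x = f y -> x = y) -> map f l = map f l' -> l = l'.
Proof.
  revert l'; induction l as [|x l IH]; intros [|y l'] H E; simpl in E; try discriminate; auto.
  injection E as E1 E2. f_equal.
  - apply H; simpl; auto.
  - apply IH; auto. intros; apply H; simpl; auto.
Qed.

Section TermInd.
Variable L : Lang.
Variable P : term L -> Prop.
Hypothesis Hv : forall n, P (TVar n).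
Hypothesis Ha : forall f args, Forall P (Vector.to_list args) -> P (TApp f args).

Fixpoint term_ind2 (t : term L) : P t :=
  match t with
  | TVar n => Hv n
  | TApp f args => Ha f args
      ((fix F n (v : Vector.t (term L) n) : Forall P (Vector.to_list v) :=
        match v with
        | Vector.nil _ => Forall_nil _
        | Vector.cons _ x n' v' => @Forall_cons _ P x (Vector.to_list v') (term_ind2 x) (F n' v')
        end) _ args)
  end.
End TermInd.

Section Codes.
Variable L : Lang.

Lemma vec_map_inj (f : term L -> nat) n (v w : Vector.t (term L) n) :
  Forall (fun t => forall t', f t = f t' -> t = t') (Vector.to_list v) ->
  Vector.to_list (Vector.map f v) = Vector.to_list (Vector.map f w) -> v = w.
Proof.
  intros HF E. rewrite !Vector.to_list_map in E. apply Vector.to_list_inj.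
  eapply map_inj_in; [|exact E]. intros x Hx. rewrite Forall_forall in HF. auto.
Qed.

Lemma code_term_inj (t t' : term L) : code_term L t = code_term L t' -> t = t'.
Proof.
  revert t'. induction t using term_ind2; intros [m|f' args'] E; simpl in E;
    apply npair_inj in E as [E1 E2]; try discriminate.
  - now subst.
  - apply npair_inj in E2 as [E2 E3]. apply (fcode_inj L) in E2. subst f'.
    apply code_list_inj in E3. f_equal. eapply vec_map_inj; eauto.
Qed.

Lemma code_atom_inj (a a' : atom L) : code_atom L a = code_atom L a' -> a = a'.
Proof.
  destruct a as [t1 t2|r args], a' as [u1 u2|r' args']; simpl; intros E;
    apply npair_inj in E as [E1 E2]; try discriminate.
  - apply npair_inj in E2 as [E2 E3]. apply code_term_inj in E2, E3. now subst.
  - apply npair_inj in E2 as [E2 E3]. apply (rcode_inj L) in E2. subst r'.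
    apply code_list_inj in E3. f_equal. eapply vec_map_inj; eauto.
    apply Forall_forall. intros; apply code_term_inj; auto.
Qed.

Lemma code_clause_inj (c c' : clause L) : code_clause L c = code_clause L c' -> c = c'.
Proof.
  unfold code_clause. intros E. apply code_list_inj in E.
  eapply map_inj_in; [|exact E]. intros [b a] _ [b' a'] E'. unfold code_lit in E'; simpl in E'.
  apply npair_inj in E' as [E1 E2]. apply code_atom_inj in E2. subst.
  destruct b, b'; simpl in E1; congruence.
Qed.

Lemma lab_clause_inj (c c' : clause L) : lab_clause L c = lab_clause L c' -> c = c'.
Proof. unfold lab_clause. intros E. apply npair_inj in E as [_ E]. now apply code_clause_inj. Qed.

Lemma teval_agree (M : Structure L) (t : term L) (s s' : nat -> dom M) :
  (forall k, In k (fv_term L t) -> s k = s' k) -> teval L M s t = teval L M s' t.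
Proof.
  revert s s'. induction t as [n|f args IH] using term_ind2; intros s s' H; simpl in *.
  - apply H; auto.
  - f_equal. apply Vector.map_ext_in. intros a Ha. apply Vector.to_list_In in Ha.
    rewrite Forall_forall in IH. apply IH; auto. intros k Hk. apply H.
    apply in_concat. exists (fv_term L a). split; auto.
    rewrite Vector.to_list_map. apply in_map; auto.
Qed.

Lemma atom_agree (M : Structure L) (a : atom L) (s s' : nat -> dom M) :
  (forall k, In k (fv_atom L a) -> s k = s' k) -> (atom_sat L M s a <-> atom_sat L M s' a).
Proof.
  destruct a as [t1 t2|r args]; simpl; intros H.
  - rewrite (teval_agree M t1 s s'), (teval_agree M t2 s s'); [tauto| |];
      intros; apply H; apply in_or_app; auto.
  - replace (Vector.map (teval L M s) args) with (Vector.map (teval L M s') args); [tauto|].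
    apply Vector.map_ext_in. intros a Ha. apply Vector.to_list_In in Ha.
    symmetry; apply teval_agree. intros k Hk. apply H.
    apply in_concat. exists (fv_term L a). split; auto.
    rewrite Vector.to_list_map. apply in_map; auto.
Qed.

Lemma clause_agree (M : Structure L) (c : clause L) (s s' : nat -> dom M) :
  (forall k, In k (fv_clause L c) -> s k = s' k) -> clause_sat L M s c -> clause_sat L M s' c.
Proof.
  intros H [x [Hx Hs]]. exists x. split; auto. unfold lit_sat in *.
  assert (E : atom_sat L M s (snd x) <-> atom_sat L M s' (snd x)).
  { apply atom_agree. intros k Hk. apply H. unfold fv_clause. apply in_concat.
    exists (fv_atom L (snd x)). split; auto. apply in_map_iff. exists x; auto. }
  destruct (fst x); tauto.
Qed.

End Codes.

Ltac labdis := match goal with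
  | H : _ = _ |- _ => unfold lab_clause, lab_ex, lab_all, lab_and, lab_or in H;
      apply npair_inj in H; destruct H as [H _]; discriminate H
  end.

From Stdlib Require Import FunctionalExtensionality.

Ltac ldis := exfalso; match goal with
  H1 : ?x = ?a, H2 : ?x = ?b |- _ => rewrite H1 in H2;
    unfold lab_clause, lab_ex, lab_all, lab_and, lab_or in H2;
    apply npair_inj in H2; destruct H2 as [H2 _]; discriminate H2 end.

Lemma numeral_ev L M sN sT n : evN L M sN sT (numeral n) = n.
Proof. induction n; simpl; auto. rewrite IHn. lia. Qed.

Lemma list_eq_nth_error {A} (p q : list A) :
  length p = length q -> (forall j, j < length p -> nth_error p j = nth_error q j) -> p = q.
Proof.
  revert q; induction p as [|x p IH]; intros [|y q] Hl H; simpl in *; try discriminate; auto.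
  f_equal.
  - specialize (H 0 ltac:(lia)). simpl in H. congruence.
  - apply IH; [lia|]. intros j Hj. apply (H (S j)). lia.
Qed.

Lemma firstn_snoc {A} (p : list A) k d : k < length p -> firstn (S k) p = firstn k p ++ [nth k p d].
Proof.
  revert k; induction p as [|x p IH]; intros k Hk; simpl in *; [lia|].
  destruct k; simpl; auto. rewrite IH by lia. reflexivity.
Qed.

Section Main.
Variable L : Lang.
Variables (T : list nat -> Prop) (l v : list nat -> nat).

Definition isEx (t : list nat) := exists i, l t = lab_ex i.

Definition binder (t : list nat) : option nat :=
  match excluded_middle_informative (exists i, l t = lab_ex i \/ l t = lab_all i) with
  | left H => Some (proj1_sig (constructive_indefinite_description _ H))
  | right _ => None
  end.

Lemma binder_q t i : (l t = lab_ex i \/ l t = lab_all i) -> binder t = Some i.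
Proof.
  intros Hi. unfold binder. destruct excluded_middle_informative as [H|H].
  - destruct constructive_indefinite_description as [j Hj]; simpl. f_equal.
    destruct Hi as [Hi|Hi], Hj as [Hj|Hj]; rewrite Hi in Hj; unfold lab_ex, lab_all in Hj;
      apply npair_inj in Hj; destruct Hj as [Hj1 Hj2]; try discriminate; auto.
  - exfalso; eauto.
Qed.

Lemma binder_none t : ~ (exists i, l t = lab_ex i \/ l t = lab_all i) -> binder t = None.
Proof. intros H. unfold binder. destruct excluded_middle_informative; tauto. Qed.

Definition step {X} (s : nat -> X) (pre : list nat) (y : X) : nat -> X :=
  match binder pre with Some i => upd s i y | None => s end.

Fixpoint Aux {X} (s : nat -> X) (pre sg : list nat) (ys : list X) : nat -> X :=
  match sg, ys with
  | j :: sg', y :: ys' => Aux (step s pre y) (pre ++ [j]) sg' ys'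
  | _, _ => s
  end.

Lemma Aux_snoc {X} sg (ys : list X) s pre j y : length sg = length ys ->
  Aux s pre (sg ++ [j]) (ys ++ [y]) = step (Aux s pre sg ys) (pre ++ sg) y.
Proof.
  revert ys s pre; induction sg as [|x sg IH]; intros [|y' ys] s pre H; simpl in *; try discriminate.
  - rewrite app_nil_r. reflexivity.
  - rewrite IH by lia. rewrite <- app_assoc. reflexivity.
Qed.

Lemma Aux_nat {X Y} (f : X -> Y) sg ys s pre :
  (fun n => f (Aux s pre sg ys n)) = Aux (fun m => f (s m)) pre sg (map f ys).
Proof.
  revert ys s pre; induction sg as [|x sg IH]; intros [|y ys] s pre; simpl; auto.
  rewrite IH. f_equal. unfold step. destruct binder; auto.
  apply functional_extensionality; intros m. unfold upd. destruct Nat.eqb; auto.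
Qed.

Definition qtrue : qf L := QAtom (AtEqN L NZero NZero).
Definition qfalse : qf L := QNeg qtrue.

Fixpoint indsf (k j : nat) : qf L :=
  match j with
  | 0 => qtrue
  | S j' => QAnd L (indsf k j') (QAtom (AtInd L (TupVar k) (numeral j') (MVar L (2*j'+1))))
  end.

Definition Cf (sg : list nat) (k : nat) : qf L :=
  QAnd L (QAtom (AtEqN L (NLen (TupVar k)) (numeral k)))
   (QAnd L (indsf k k)
     (QAtom (AtEqM L (MVar L (2*k+1)) (MG L (numeral (code_list (firstn k sg))) (TupVar k))))).

Definition negs_l (sg : list nat) (ks : list nat) : qf L :=
  fold_right (fun k acc => if excluded_middle_informative (isEx (firstn k sg))
     then QOr L (QNeg (Cf sg k)) acc else acc) qfalse ks.

Definition negs sg := negs_l sg (seq 0 (length sg)).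

Fixpoint tr (rh : nat -> nat) (t : term L) : tmM L :=
  match t with
  | TVar n => MVar L (rh n)
  | TApp f args => MApp L f (Vector.map (tr rh) args)
  end.

Definition atf rh (a : atom L) : tatom L :=
  match a with
  | AEq t1 t2 => AtEqM L (tr rh t1) (tr rh t2)
  | ARel r args => AtRel L r (Vector.map (tr rh) args)
  end.

Definition litf rh (x : literal L) : qf L :=
  if fst x then QAtom (atf rh (snd x)) else QNeg (QAtom (atf rh (snd x))).

Definition cl rh (c : clause L) : qf L := fold_right (fun x acc => QOr L (litf rh x) acc) qfalse c.

Definition rho (sg : list nat) : nat -> nat :=
  Aux (fun n => 2*n) [] sg (map (fun k => 2*k+1) (seq 0 (length sg))).

Definition clause_of (sg : list nat) : clause L :=
  match excluded_middle_informative (exists c, l sg = lab_clause L c) with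
  | left H => proj1_sig (constructive_indefinite_description _ H)
  | right _ => []
  end.

Lemma clause_of_eq sg c : l sg = lab_clause L c -> clause_of sg = c.
Proof.
  intros H. unfold clause_of. destruct excluded_middle_informative as [H'|H'].
  - destruct constructive_indefinite_description as [c' Hc']; simpl.
    rewrite H in Hc'. symmetry. apply lab_clause_inj; auto.
  - exfalso; eauto.
Qed.

Definition form (sg : list nat) : pi1 L :=
  match excluded_middle_informative (T sg /\ exists c, l sg = lab_clause L c) with
  | left _ => PQF (QOr L (negs sg) (cl (rho sg) (clause_of sg)))
  | right _ => PQF qtrue
  end.

Definition theta (s : nat) : pi1 L :=
  match excluded_middle_informative (exists sg, code_list sg = s) with
  | left H => form (proj1_sig (constructive_indefinite_description _ H))
  | right _ => PQF qtrue
  end.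

Lemma theta_code sg : theta (code_list sg) = form sg.
Proof.
  unfold theta. destruct excluded_middle_informative as [H|H].
  - destruct constructive_indefinite_description as [t Ht]; simpl.
    apply code_list_inj in Ht. now subst.
  - exfalso; eauto.
Qed.

Section Sem.
Variable M : Structure L.
Variables (R : nat -> Prop) (g : nat -> list (dom M) -> dom M).
Variables (sM : nat -> dom M) (sN : nat -> nat) (sT : nat -> list (dom M)).

Lemma tr_ev rh t : evM L M g sM sN sT (tr rh t) = teval L M (fun n => sM (rh n)) t.
Proof.
  induction t as [n|f args IH] using term_ind2; simpl; auto.
  f_equal. rewrite Vector.map_map. apply Vector.map_ext_in. intros a Ha.
  apply Vector.to_list_In in Ha. rewrite Forall_forall in IH. auto.
Qed.

Lemma cl_sem rh c : qf_sat L M R g sM sN sT (cl rh c) <-> clause_sat L M (fun n => sM (rh n)) c.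
Proof.
  unfold clause_sat. induction c as [|x c IH]; simpl.
  - split; [intros H; exfalso; apply H; reflexivity| intros [x [[] _]]].
  - rewrite IH. 
    assert (E : qf_sat L M R g sM sN sT (litf rh x) <-> lit_sat L M (fun n => sM (rh n)) x).
    { destruct x as [b a]; unfold litf, lit_sat; simpl.
      assert (E2 : tatom_sat L M R g sM sN sT (atf rh a) <-> atom_sat L M (fun n => sM (rh n)) a).
      { destruct a; simpl.
        - rewrite !tr_ev. tauto.
        - rewrite Vector.map_map. rewrite (Vector.map_ext _ _ (fun x => evM L M g sM sN sT (tr rh x)) (teval L M (fun n => sM (rh n))) (tr_ev rh)). tauto. }
      destruct b; simpl; tauto. }
    rewrite E. split.
    + intros [H|[y [Hy Hs]]]; [exists x|exists y]; auto.
    + intros [y [[<-|Hy] Hs]]; [left|right; exists y]; auto.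
Qed.

Lemma negs_l_sem sg ks : qf_sat L M R g sM sN sT (negs_l sg ks) <->
  exists k, In k ks /\ isEx (firstn k sg) /\ ~ qf_sat L M R g sM sN sT (Cf sg k).
Proof.
  induction ks as [|k ks IH]; simpl.
  - split; [intros H; exfalso; apply H; reflexivity| intros [k [[] _]]].
  - destruct excluded_middle_informative as [He|He]; simpl; rewrite IH; split.
    + intros [H|[k' [H1 H2]]]; [exists k|exists k']; auto.
    + intros [k' [[<-|H1] H2]]; [left; tauto|right; exists k'; auto].
    + intros [k' [H1 H2]]; exists k'; auto.
    + intros [k' [[<-|H1] H2]]; [tauto|exists k'; auto].
Qed.

Lemma negs_sem sg : qf_sat L M R g sM sN sT (negs sg) <->
  exists k, k < length sg /\ isEx (firstn k sg) /\ ~ qf_sat L M R g sM sN sT (Cf sg k).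
Proof.
  unfold negs. rewrite negs_l_sem. split; intros [k [H1 H2]]; exists k; split; auto;
    rewrite in_seq in *; lia.
Qed.

Lemma indsf_sem k j : qf_sat L M R g sM sN sT (indsf k j) <->
  forall j', j' < j -> nth_error (sT k) j' = Some (sM (2*j'+1)).
Proof.
  induction j; simpl.
  - split; intros; [lia|reflexivity].
  - rewrite IHj. rewrite numeral_ev. split.
    + intros [H1 H2] j' Hj. destruct (Nat.eq_dec j' j); [subst; auto|apply H1; lia].
    + intros H; split; auto.
Qed.

Lemma Cf_sem sg k : qf_sat L M R g sM sN sT (Cf sg k) <->
  length (sT k) = k /\ (forall j, j < k -> nth_error (sT k) j = Some (sM (2*j+1))) /\
  sM (2*k+1) = g (code_list (firstn k sg)) (sT k).
Proof. unfold Cf. simpl. rewrite indsf_sem, !numeral_ev. tauto. Qed.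

Lemma rho_sem sg : (fun n => sM (rho sg n)) =
  Aux (fun n => sM (2*n)) [] sg (map (fun k => sM (2*k+1)) (seq 0 (length sg))).
Proof. unfold rho. rewrite Aux_nat, map_map. reflexivity. Qed.

End Sem.

Variable C : nat -> Prop.
Hypothesis Hc : C_computable_BB_code L C T l v.

Lemma Htree : is_tree T.
Proof. destruct Hc as [[[H _] _] _]. auto. Qed.
Lemma Hnode sg : T sg -> node_ok L T l v sg.
Proof. destruct Hc as [[[_ H] _] _]. auto. Qed.
Lemma Hwf : well_founded_tree T.
Proof. destruct Hc as [[_ [H _]] _]. auto. Qed.
Lemma Hroot k : ~ inv v [] k.
Proof. destruct Hc as [[_ [_ H]] _]. auto. Qed.
Lemma Hnor sg : T sg -> l sg <> lab_or.
Proof. destruct Hc as [_ [_ [_ [_ H]]]]. auto. Qed.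

Lemma T_prefix t r : T (t ++ r) -> T t.
Proof.
  induction r as [|x r IH] using rev_ind; intros H.
  - rewrite app_nil_r in H; auto.
  - apply IH. rewrite app_assoc in H. apply (proj2 Htree _ _ H).
Qed.

Lemma T_firstn sg k : T sg -> T (firstn k sg).
Proof. intros H. rewrite <- (firstn_skipn k sg) in H. eapply T_prefix; eauto. Qed.

Lemma node_cases sg : T sg -> (exists c, l sg = lab_clause L c) \/ (exists i, l sg = lab_ex i) \/
  (exists i, l sg = lab_all i) \/ l sg = lab_and.
Proof.
  intros HT. destruct (Hnode sg HT) as [[c [H _]]|[[i [[H|H] _]]|[[H|H] _]]]; eauto 6.
  exfalso; eapply Hnor; eauto.
Qed.

Lemma leaf_info sg c : T sg -> l sg = lab_clause L c ->
  (forall k, In k (fv_clause L c) <-> inv v sg k) /\ forall j, ~ T (sg ++ [j]).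
Proof.
  intros HT Hl. destruct (Hnode sg HT) as [[c' [H1 [H2 H3]]]|[[i [[H|H] _]]|[[H|H] _]]]; try ldis.
  rewrite Hl in H1. apply lab_clause_inj in H1. subst. auto.
Qed.

Lemma q_info sg i : T sg -> (l sg = lab_ex i \/ l sg = lab_all i) ->
  T (sg ++ [0]) /\ (forall j, T (sg ++ [j]) -> j = 0) /\
  (forall k, inv v sg k <-> (inv v (sg ++ [0]) k /\ k <> i)).
Proof.
  intros HT Hl. destruct (Hnode sg HT) as [[c' [H1 [H2 H3]]]|[[i' [Hi' [H1 [H2 H3]]]]|[[H|H] _]]];
    [destruct Hl; ldis| |destruct Hl; ldis..].
  assert (i' = i).
  { destruct Hl as [Hl|Hl], Hi' as [Hi|Hi]; rewrite Hl in Hi; unfold lab_ex, lab_all in Hi;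
      apply npair_inj in Hi; destruct Hi as [Hi1 Hi2]; try discriminate; auto. }
  subst; auto.
Qed.

Lemma and_info sg : T sg -> l sg = lab_and ->
  forall k, inv v sg k <-> exists j, T (sg ++ [j]) /\ inv v (sg ++ [j]) k.
Proof.
  intros HT Hl. destruct (Hnode sg HT) as [[c' [H1 [H2 H3]]]|[[i' [[H|H] _]]|[_ H]]]; try ldis. auto.
Qed.

Lemma binder_and sg : l sg = lab_and -> binder sg = None.
Proof. intros H. apply binder_none. intros [i [H'|H']]; ldis. Qed.

Section Mod.
Variable M : Structure L.
Variable y0 : dom M.

Definition A (s : nat -> dom M) sg ys := Aux s [] sg ys.

Lemma A_snoc s sg ys j y : length sg = length ys ->
  A s (sg ++ [j]) (ys ++ [y]) = step (A s sg ys) sg y.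
Proof. intros H. unfold A. rewrite Aux_snoc by auto. reflexivity. Qed.

Lemma bound sg : T sg -> forall ys s s', length ys = length sg ->
  forall k, inv v sg k -> A s sg ys k = A s' sg ys k.
Proof.
  induction sg as [|x sg IH] using rev_ind; intros HT ys s s' Hl k Hk.
  - exfalso; eapply Hroot; eauto.
  - destruct ys as [|y ys _] using rev_ind; [rewrite length_app in Hl; simpl in Hl; lia|].
    rewrite !length_app in Hl; simpl in Hl.
    rewrite !A_snoc by lia. unfold step.
    assert (HT0 : T sg) by (eapply T_prefix; eauto).
    destruct (node_cases sg HT0) as [[c Hc0]|[[i Hi]|[[i Hi]|Ha]]].
    + exfalso. eapply (proj2 (leaf_info sg c HT0 Hc0)); eauto.
    + rewrite (binder_q sg i (or_introl Hi)).
      destruct (q_info sg i HT0 (or_introl Hi)) as [_ [Hj Hinv]].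
      rewrite (Hj x HT) in Hk. unfold upd. destruct (Nat.eqb_spec k i); auto.
      apply IH; auto; [lia|]. apply Hinv; auto.
    + rewrite (binder_q sg i (or_intror Hi)).
      destruct (q_info sg i HT0 (or_intror Hi)) as [_ [Hj Hinv]].
      rewrite (Hj x HT) in Hk. unfold upd. destruct (Nat.eqb_spec k i); auto.
      apply IH; auto; [lia|]. apply Hinv; auto.
    + rewrite (binder_and sg Ha). apply IH; auto; [lia|].
      apply (and_info sg HT0 Ha). eauto.
Qed.

Lemma fv_lemma sg s : SatNode L T l M sg s -> T sg ->
  forall s', (forall k, inv v sg k -> s k = s' k) -> SatNode L T l M sg s'.
Proof.
  induction 1 as [sg s c Hl Hs|sg s i a Hl Hs IH|sg s i Hl Hs IH|sg s Hl Hs IH|sg s j Hl HTj Hs IH];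
    intros HT s' Hag.
  - destruct (leaf_info sg c HT Hl) as [Hfv _]. apply sat_leaf with c; auto.
    refine (clause_agree L M c s s' _ Hs). intros k Hk. apply Hag, Hfv; auto.
  - destruct (q_info sg i HT (or_introl Hl)) as [HT0 [_ Hinv]].
    apply (sat_ex L T l M sg s' i a); auto. apply IH; auto. intros k Hk. unfold upd.
    destruct (Nat.eqb_spec k i); auto. apply Hag, Hinv; auto.
  - destruct (q_info sg i HT (or_intror Hl)) as [HT0 [_ Hinv]].
    apply (sat_all L T l M sg s' i); auto. intros a. apply (IH a); auto. intros k Hk. unfold upd.
    destruct (Nat.eqb_spec k i); auto. apply Hag, Hinv; auto.
  - apply sat_and; auto. intros j Hj. apply IH; auto. intros k Hk. apply Hag.
    apply (and_info sg HT Hl). eauto.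
  - exfalso. eapply Hnor; eauto.
Qed.

Lemma indep sg ys s s' : T sg -> length ys = length sg ->
  SatNode L T l M sg (A s sg ys) -> SatNode L T l M sg (A s' sg ys).
Proof. intros HT Hl H. eapply fv_lemma; eauto. intros k Hk. apply bound; auto. Qed.

Definition Good sg ys := forall s, SatNode L T l M sg (A s sg ys).

Definition gdef (c : nat) (p : list (dom M)) : dom M :=
  epsilon (inhabits y0) (fun a => forall t, code_list t = c -> T t -> isEx t ->
     length p = length t -> Good t p -> Good (t ++ [0]) (p ++ [a])).

Lemma gdef_spec t p : T t -> isEx t -> length p = length t -> Good t p ->
  Good (t ++ [0]) (p ++ [gdef (code_list t) p]).
Proof.
  intros HT [i Hi] Hl HG.
  assert (Hex : exists a, forall t', code_list t' = code_list t -> T t' -> isEx t' ->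
     length p = length t' -> Good t' p -> Good (t' ++ [0]) (p ++ [a])).
  { pose (s0 := fun _ : nat => y0). specialize (HG s0).
    inversion HG; subst; try ldis.
    assert (i0 = i) by (rewrite Hi in H; unfold lab_ex in H; apply npair_inj in H; intuition).
    subst i0. exists a. intros t' Ht' _ _ _ _. apply code_list_inj in Ht'. subst t'.
    intros s. destruct (q_info t i HT (or_introl Hi)) as [HT0 _].
    apply indep with s0; [auto|rewrite !length_app; simpl; lia|].
    rewrite A_snoc by auto. unfold step. rewrite (binder_q t i (or_introl Hi)). auto. }
  apply (epsilon_spec (inhabits y0) _ Hex t); auto. exists i; auto.
Qed.


Lemma firstn_app_le {B} (p q : list B) k : k <= length p -> firstn k (p ++ q) = firstn k p.
Proof. intros H. rewrite firstn_app. replace (k - length p) with 0 by lia. simpl. apply app_nil_r. Qed.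

Definition valid (g : nat -> list (dom M) -> dom M) sg ys :=
  length ys = length sg /\ forall k, k < length sg -> isEx (firstn k sg) ->
    nth_error ys k = Some (g (code_list (firstn k sg)) (firstn k ys)).

Lemma forward (HM : ModelsCode L M T l) sg sM sN sT :
  pi1_sat L M C gdef sM sN sT (form sg).
Proof.
  unfold form. destruct excluded_middle_informative as [[HT [c Hc0]]|_]; simpl; [|reflexivity].
  rewrite (clause_of_eq sg c Hc0).
  destruct (classic (exists k, k < length sg /\ isEx (firstn k sg) /\
     ~ qf_sat L M C gdef sM sN sT (Cf sg k))) as [Hn|Hn].
  { left. apply negs_sem; auto. }
  right. apply cl_sem. rewrite rho_sem.
  set (s := fun n => sM (2*n)).
  set (ys := map (fun k => sM (2*k+1)) (seq 0 (length sg))).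
  assert (Hyl : length ys = length sg) by (unfold ys; rewrite length_map, length_seq; auto).
  assert (Hnth : forall k, k < length sg -> nth_error ys k = Some (sM (2*k+1))).
  { intros k Hk. unfold ys. rewrite nth_error_map, nth_error_seq.
    destruct (Nat.ltb_spec k (length sg)); [reflexivity|lia]. }
  assert (Hck : forall k, k < length sg -> isEx (firstn k sg) ->
     sT k = firstn k ys /\ sM (2*k+1) = gdef (code_list (firstn k sg)) (sT k)).
  { intros k Hk HE. assert (HC : qf_sat L M C gdef sM sN sT (Cf sg k)).
    { apply NNPP. intros HC. apply Hn. eauto. }
    apply Cf_sem in HC as [H1 [H2 H3]]. split; auto.
    apply list_eq_nth_error.
    - rewrite length_firstn. lia.
    - intros j Hj. rewrite H2 by lia. rewrite nth_error_firstn.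
      destruct (Nat.ltb_spec j k); [|lia]. rewrite Hnth by lia. reflexivity. }
  assert (Hgood : forall k, k <= length sg -> Good (firstn k sg) (firstn k ys)).
  { induction k as [|k IH]; intros Hk.
    - intros s0. simpl. apply HM.
    - rewrite (firstn_snoc sg k 0) by lia. rewrite (firstn_snoc ys k y0) by lia.
      specialize (IH ltac:(lia)).
      set (t := firstn k sg). set (j := nth k sg 0).
      assert (HTj : T (t ++ [j])).
      { unfold t, j. rewrite <- firstn_snoc by lia. apply T_firstn; auto. }
      assert (HTt : T t) by (eapply T_prefix; eauto).
      assert (Hlen : length (firstn k ys) = length t).
      { unfold t. rewrite !length_firstn. lia. }
      assert (Et : t = firstn k sg) by reflexivity. clearbody t j.
      rewrite <- Et in IH.
      destruct (node_cases t HTt) as [[c' Hc']|[[i Hi]|[[i Hi]|Ha]]].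
      + exfalso. eapply (proj2 (leaf_info t c' HTt Hc')); eauto.
      + destruct (q_info t i HTt (or_introl Hi)) as [_ [Hj _]].
        rewrite (Hj j HTj).
        destruct (Hck k ltac:(lia) ltac:(rewrite <- Et; exists i; exact Hi)) as [E1 E2].
        rewrite <- Et in E2.
        replace (nth k ys y0) with (gdef (code_list t) (firstn k ys)).
        * apply gdef_spec; auto. exists i; auto.
        * rewrite <- E1. rewrite <- E2. symmetry. apply nth_error_nth. apply Hnth. lia.
      + destruct (q_info t i HTt (or_intror Hi)) as [_ [Hj _]].
        rewrite (Hj j HTj). intros s0. rewrite A_snoc by auto. unfold step.
        rewrite (binder_q t i (or_intror Hi)).
        specialize (IH s0). inversion IH; subst; try ldis.
        assert (i0 = i) by (rewrite Hi in H; unfold lab_all in H; apply npair_inj in H; intuition).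
        subst. auto.
      + intros s0. rewrite A_snoc by auto. unfold step. rewrite (binder_and t Ha).
        specialize (IH s0). inversion IH; subst; try ldis. auto. }
  specialize (Hgood (length sg) ltac:(lia)). rewrite firstn_all in Hgood.
  rewrite <- Hyl in Hgood. rewrite firstn_all in Hgood.
  specialize (Hgood s). inversion Hgood; subst; try ldis.
  rewrite Hc0 in H. apply lab_clause_inj in H. subst. auto.
Qed.

Section Rev.
Variables (R : nat -> Prop) (g : nat -> list (dom M) -> dom M).
Hypothesis Hth : forall s, TupModels L M R g (theta s).

Definition Bad sg := T sg /\ exists ys s, valid g sg ys /\ ~ SatNode L T l M sg (A s sg ys).

Lemma valid_snoc sg ys j y : valid g sg ys -> (isEx sg -> y = g (code_list sg) ys) ->
  valid g (sg ++ [j]) (ys ++ [y]).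
Proof.
  intros [Hl Hv] Hy. split; [rewrite !length_app; simpl; lia|].
  intros k Hk HE. rewrite length_app in Hk; simpl in Hk.
  destruct (Nat.eq_dec k (length sg)) as [->|Hne].
  - rewrite firstn_app_le in * by lia. rewrite firstn_all in *.
    rewrite <- Hl at 2. rewrite firstn_app_le by lia. rewrite firstn_all.
    rewrite nth_error_app2 by lia. rewrite Hl, Nat.sub_diag. simpl. f_equal. auto.
  - rewrite firstn_app_le in * by lia. rewrite firstn_app_le by lia.
    rewrite nth_error_app1 by lia. apply Hv; auto. lia.
Qed.

Definition mkM (s : nat -> dom M) (ys : list (dom M)) (m : nat) : dom M :=
  if Nat.even m then s (Nat.div2 m) else nth (Nat.div2 m) ys y0.

Lemma sM_even s ys n : mkM s ys (2*n) = s n.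
Proof. unfold mkM. rewrite Nat.even_even, Nat.div2_double. reflexivity. Qed.

Lemma sM_odd s ys n : mkM s ys (2*n+1) = nth n ys y0.
Proof.
  unfold mkM. rewrite Nat.even_odd. replace (2*n+1) with (S (2*n)) by lia.
  rewrite Nat.div2_succ_double. reflexivity.
Qed.

Lemma bad_step sg : Bad sg -> exists j, Bad (sg ++ [j]).
Proof.
  intros [HT [ys [s [Hv HnS]]]]. apply NNPP. intros Hno.
  assert (Hall : forall j ys' s', T (sg ++ [j]) -> valid g (sg ++ [j]) ys' ->
     SatNode L T l M (sg ++ [j]) (A s' (sg ++ [j]) ys')).
  { intros j ys' s' HTj Hv'. apply NNPP. intros Hn. apply Hno. exists j. split; eauto. }
  apply HnS. destruct Hv as [Hl Hv].
  destruct (node_cases sg HT) as [[c Hc0]|[[i Hi]|[[i Hi]|Ha]]].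
  - pose proof (Hth (code_list sg)) as H. rewrite theta_code in H. unfold form in H.
    destruct excluded_middle_informative as [_|Hn]; [|exfalso; eauto].
    rewrite (clause_of_eq sg c Hc0) in H.
    set (sM := mkM s ys).
    specialize (H sM (fun _ => 0) (fun k => firstn k ys)). simpl in H.
    destruct H as [H|H].
    + exfalso. apply negs_sem in H as [k [Hk [HE HC]]]. apply HC. apply Cf_sem.
      split; [rewrite length_firstn; lia|]. split.
      * intros j Hj. unfold sM. rewrite sM_odd. rewrite nth_error_firstn.
        destruct (Nat.ltb_spec j k); [|lia]. apply nth_error_nth'. lia.
      * unfold sM. rewrite sM_odd. apply nth_error_nth. apply Hv; auto.
    + apply cl_sem in H. rewrite rho_sem in H. apply sat_leaf with c; auto.
      replace (A s sg ys) with (Aux (fun n : nat => sM (2 * n)) [] sg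
        (map (fun k : nat => sM (2 * k + 1)) (seq 0 (length sg)))); auto.
      unfold A. f_equal.
      * apply functional_extensionality. intros n. unfold sM. apply sM_even.
      * apply list_eq_nth_error; [rewrite length_map, length_seq; auto|].
        intros j Hj. rewrite length_map, length_seq in Hj.
        rewrite nth_error_map, nth_error_seq. destruct (Nat.ltb_spec j (length sg)); [|lia].
        cbn [option_map]. replace (0+j) with j by lia. unfold sM. rewrite sM_odd. symmetry. f_equal. apply nth_error_nth'. lia.
  - destruct (q_info sg i HT (or_introl Hi)) as [HT0 _].
    apply (sat_ex L T l M sg (A s sg ys) i (g (code_list sg) ys)); auto.
    specialize (Hall 0 (ys ++ [g (code_list sg) ys]) s HT0
      (valid_snoc sg ys 0 _ (conj Hl Hv) (fun _ => eq_refl))).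
    rewrite A_snoc in Hall by auto. unfold step in Hall. rewrite (binder_q sg i (or_introl Hi)) in Hall.
    auto.
  - destruct (q_info sg i HT (or_intror Hi)) as [HT0 _].
    apply (sat_all L T l M sg (A s sg ys) i); auto. intros a.
    assert (Hv' : valid g (sg ++ [0]) (ys ++ [a])).
    { apply valid_snoc; [split; auto|]. intros [i' Hi']. ldis. }
    specialize (Hall 0 (ys ++ [a]) s HT0 Hv').
    rewrite A_snoc in Hall by auto. unfold step in Hall. rewrite (binder_q sg i (or_intror Hi)) in Hall.
    auto.
  - apply sat_and; auto. intros j HTj.
    assert (Hv' : valid g (sg ++ [j]) (ys ++ [y0])).
    { apply valid_snoc; [split; auto|]. intros [i' Hi']. ldis. }
    specialize (Hall j (ys ++ [y0]) s HTj Hv').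
    rewrite A_snoc in Hall by auto. unfold step in Hall. rewrite (binder_and sg Ha) in Hall. auto.
Qed.

Lemma no_bad : ~ Bad [].
Proof.
  intros H0.
  set (nxt := fun sg => epsilon (inhabits 0) (fun j => Bad (sg ++ [j]))).
  set (path := fix path n := match n with 0 => [] | S n => path n ++ [nxt (path n)] end).
  assert (HB : forall n, Bad (path n)).
  { induction n; simpl; auto. apply (epsilon_spec (inhabits 0) (fun j => Bad (path n ++ [j]))).
    apply bad_step; auto. }
  apply Hwf. exists (fun n => nxt (path n)). intros n.
  replace (map (fun n => nxt (path n)) (seq 0 n)) with (path n).
  - apply (HB n).
  - induction n; [reflexivity|]. rewrite seq_S, map_app. rewrite <- IHn. reflexivity.
Qed.

Lemma reverse : ModelsCode L M T l.
Proof.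
  intros s. apply NNPP. intros Hn. apply no_bad. split; [apply (proj1 Htree)|].
  exists [], s. split; [split; simpl; auto; intros; lia|]. exact Hn.
Qed.

End Rev.
End Mod.
End Main.

Theorem lemma5p8 (L : Lang) (C : nat -> Prop)
  (T : list nat -> Prop) (l v : list nat -> nat) :
  C_computable_BB_code L C T l v ->
  exists (chi : pi1 L) (theta : nat -> pi1 L),
    forall M : Structure L, inhabited (dom M) ->
      (ModelsCode L M T l <->
       exists (g : nat -> list (dom M) -> dom M) (R : nat -> Prop),
         TupModels L M R g chi /\
         (forall s, TupModels L M R g (theta s)) /\
         (forall n, C n -> TupModels L M R g (PQF (QAtom (AtR (numeral n))))) /\
         (forall n, ~ C n -> TupModels L M R g (PQF (QNeg (QAtom (AtR (numeral n))))))).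
Proof.
  intros Hc. exists (PQF (QAtom (AtEqN L NZero NZero))), (theta L T l).
  intros M [y0]. split.
  - intros HM. exists (gdef L T l M y0), C. split; [intros ? ? ?; reflexivity|]. split.
    + intros s sM sN sT. unfold theta. destruct excluded_middle_informative; [|reflexivity].
      apply (forward L T l v C Hc M y0 HM).
    + split; intros n Hn sM sN sT; simpl; rewrite numeral_ev; auto.
  - intros [g [R [_ [Hth _]]]]. eapply (reverse L T l v C Hc M y0 R g); eauto.
Qed.
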